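(* Let $\Gamma$ be a Deza graph with parameters $(n,k,k-1,a)$, $k>1$, $\beta=1$. For an $NA$-vertex $x$, $(x')_b=(x_b)'$.
   Context: A Deza graph with parameters $(n,k,b,a)$, $a\le b$, is a $k$-regular graph on $n$ vertices in which any two distinct vertices have $a$ or $b$ common neighbours; $\beta$ is the number of vertices $u\ne v$ with exactly $b$ common neighbours with a given vertex $v$. Since $\beta=1$, for each vertex $x$ let $x_b$ denote the unique vertex having $b=k-1$ common neighbours with $x$. A vertex $x$ is an $A$-vertex if $x$ is adjacent to $x_b$, and an $NA$-vertex otherwise (if $x$ is $NA$ then so is $x_b$). For an $NA$-vertex $x$, $x'$ denotes the unique neighbour of $x$ not adjacent to $x_b$. *)

(* Defs.v *)
From mathcomp Require Import all_boot.
Set Implicit Arguments. Unset Strict Implicit. Unset Printing Implicit Defensive.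

Definition simple_graph (T : finType) (e : rel T) : Prop :=
  symmetric e /\ irreflexive e.

Definition ncommon (T : finType) (e : rel T) (x y : T) : nat :=
  #|[set z | e x z && e y z]|.

Definition deza_graph (T : finType) (e : rel T) (n k b a : nat) : Prop :=
  [/\ simple_graph e, #|T| = n, a <= b,
      (forall x : T, #|[set y | e x y]| = k) &
      (forall x y : T, x != y -> ncommon e x y = a \/ ncommon e x y = b)].

Definition beta_of (T : finType) (e : rel T) (b : nat) (v : T) : nat :=
  #|[set u | (u != v) && (ncommon e v u == b)]|.

(* y is the vertex x_b (the vertex having b common neighbours with x) *)
Definition b_partner (T : finType) (e : rel T) (b : nat) (x y : T) : Prop :=
  x != y /\ ncommon e x y = b.

(* Main.v *)
Require Import Defs.
From mathcomp Require Import all_boot.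
From mathcomp Require Import zify.

Theorem lemma12 (T : finType) (e : rel T) (n k a : nat)
  (hD : deza_graph e n k k.-1 a) (hk : 1 < k)
  (hbeta : forall v : T, beta_of e k.-1 v = 1)
  (x xb xbb x' xb' : T) :
  b_partner e k.-1 x xb -> ~~ e x xb ->
  e x x' -> ~~ e x' xb ->
  b_partner e k.-1 xb xbb ->
  e xb xb' -> ~~ e xb' xbb ->
  b_partner e k.-1 x' xb'.
Proof.
case: hD => [[esym eirr] _ hab hdeg hc].
have nsym : forall u v, ncommon e u v = ncommon e v u.
  by move=> u v; rewrite /ncommon; apply: eq_card => z; rewrite !inE andbC.
have puniq : forall v p1 p2, b_partner e k.-1 v p1 -> b_partner e k.-1 v p2 -> p1 = p2.
  move=> v p1 p2 [h1 c1] [h2 c2].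
  have := hbeta v; rewrite /beta_of => /eqP/cards1P [z hz].
  have: p1 \in [set u | (u != v) && (ncommon e v u == k.-1)].
    by rewrite inE eq_sym h1 c1 eqxx.
  rewrite hz inE => /eqP ->.
  have: p2 \in [set u | (u != v) && (ncommon e v u == k.-1)].
    by rewrite inE eq_sym h2 c2 eqxx.
  by rewrite hz inE => /eqP ->.
have cvv : forall v, ncommon e v v = k.
  by move=> v; rewrite -(hdeg v) /ncommon; apply: eq_card => z; rewrite !inE andbb.
have altk : a < k.-1.
  rewrite ltn_neqAle hab andbT; apply/negP => /eqP ha.
  have sub : [set y | e x y] \subset [set u | (u != x) && (ncommon e x u == k.-1)].
    apply/subsetP => y; rewrite !inE => hxy.
    have hyx : y != x by apply: contraTneq hxy => ->; rewrite eirr.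
    rewrite hyx /=.
    have hxy' : x != y by rewrite eq_sym.
    by case: (hc x y hxy') => ->; rewrite ?ha eqxx.
  have := subset_leq_card sub; rewrite hdeg.
  have := hbeta x; rewrite /beta_of => ->. lia.
have cform : forall v pv w, b_partner e k.-1 v pv ->
    ncommon e w v = a + (k - a) * (w == v) + (k.-1 - a) * (w == pv).
  move=> v pv w hp; case: (hp) => hvp cvp.
  have hpv : pv != v by rewrite eq_sym.
  have [->|hwv] := eqVneq w v.
    rewrite cvv ?eqxx ?(negbTE hvp) /=. lia.
  have [->|hwp] := eqVneq w pv.
    rewrite nsym cvp ?(negbTE hpv) ?eqxx /=. lia.
  rewrite ?(negbTE hwv) ?(negbTE hwp) /= !muln0 !addn0.
  case: (hc w v hwv) => // h; exfalso.
  have hw : b_partner e k.-1 v w by split; [rewrite eq_sym | rewrite nsym].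
  by move: hwp; rewrite (puniq _ _ _ hw hp) eqxx.
have ex : forall s t, \sum_w e s w * ncommon e w t
    = \sum_w \sum_z (e s w && e w z && e t z : nat).
  move=> s t; apply: eq_bigr => w _; rewrite /ncommon -sum1_card big_mkcond big_distrr /=.
  apply: eq_bigr => z _; rewrite inE.
  by case: (e s w); case: (e w z); case: (e t z).
have F : forall u v, \sum_w e u w * ncommon e w v = \sum_w e v w * ncommon e w u.
  move=> u v; rewrite !ex [in RHS]exchange_big; apply: eq_bigr => w _.
  apply: eq_bigr => z _; rewrite (esym z w).
  by case: (e u w); case: (e w z); case: (e v z).
have degsum : forall u, \sum_w (e u w : nat) = k.
  move=> u; rewrite -(hdeg u) -sum1_card [RHS]big_mkcond; apply: eq_bigr => w _.
  by rewrite inE; case: (e u w).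
have sel : forall u v c, \sum_w e u w * (c * (w == v)) = c * e u v.
  move=> u0 v0 c; rewrite (bigD1 v0) // eqxx muln1 big1; first by rewrite /= addn0 mulnC.
  by move=> w /= /negbTE ->; rewrite !muln0.
have Fform : forall u v pv, b_partner e k.-1 v pv ->
    \sum_w e u w * ncommon e w v = a * k + (k - a) * e u v + (k.-1 - a) * e u pv.
  move=> u v pv hp.
  under eq_bigr => w _ do rewrite (cform v pv w hp) mulnDr mulnDr.
  by rewrite !big_split -big_distrl degsum !sel /= mulnC.
have comm : forall u v pu pv, b_partner e k.-1 u pu -> b_partner e k.-1 v pv ->
    e u pv = e v pu.
  move=> u v pu pv hu hv; have := F u v.
  rewrite (Fform u v pv hv) (Fform v u pu hu) (esym v u).
  move: altk; case: (e u v); case: (e u pv); case: (e v pu) => //= ; lia.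
move=> [hxxb cxxb] nxxb hxx' nx'xb hpxb hxbxb' nxb'xbb.
have hxbx : b_partner e k.-1 xb x by split; [rewrite eq_sym | rewrite nsym].
have xbbE : xbb = x := puniq _ _ _ hpxb hxbx.
subst xbb.
have := hbeta x'; rewrite /beta_of => /eqP/cards1P [q hq].
have hq' : b_partner e k.-1 x' q.
  have: q \in [set q] by rewrite set11.
  rewrite -hq inE => /andP [h1 /eqP h2]; split; [rewrite eq_sym|]; by [].
have q_nx : e x q = false.
  by rewrite -(comm x' x q xb hq' (conj hxxb cxxb)); apply/negbTE.
have q_xb : e xb q = true by rewrite -(comm x' xb q x hq' hxbx) esym.
have card1 : #|[set y | e xb y] :\: [set y | e x y]| = 1.
  have := cardsID [set y | e x y] [set y | e xb y].
  have -> : #|[set y | e xb y] :&: [set y | e x y]| = k.-1.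
    by rewrite -cxxb /ncommon; apply: eq_card => z; rewrite !inE andbC.
  rewrite hdeg; lia.
move/eqP/cards1P: card1 => [z hz].
have : q \in [set y | e xb y] :\: [set y | e x y] by rewrite !inE q_xb q_nx.
rewrite hz inE => /eqP qz.
have : xb' \in [set y | e xb y] :\: [set y | e x y].
  by rewrite !inE hxbxb' andbT (esym x).
rewrite hz inE => /eqP xz.
by rewrite xz -qz.
Qed.
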